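(* Let $q$ be a prime power, and let $\mu_{q+1}$ denote the group of all $(q+1)$-th roots of unity in $\mathbb{F}_{q^2}$. Pick an integer $v$ and a polynomial $D(X)\in\mathbb{F}_{q^2}[X]$ such that the function $c\mapsto c^v D(c)^{q-1}$ permutes $\mu_{q+1}$. Let $m$ be a nonnegative integer, and let $s_1,\dots,s_m$ and $t_1,\dots,t_m$ be positive integers such that for each $i$ we have $\gcd(s_i+1,q)=1$ and $(q+1)/\gcd(t_i,q+1)$ is coprime to $s_i+1$. (1) If $r$ is a positive integer such that $\gcd(r,q-1)=1$ and $r\equiv v+\sum_{i=1}^m s_it_i\pmod{q+1}$, then $X^r B(X^{q-1})$ permutes $\mathbb{F}_{q^2}$, where $B(X):=D(X)\prod_{i=1}^m \sum_{j=0}^{s_i} X^{jt_i}$. (2) If $B(X)\in\mathbb{F}_{q^2}[X]$ satisfies $D(X)=B(X)\prod_{i=1}^m\sum_{j=0}^{s_i} X^{jt_i}$, and $r$ is a positive integer such that $\gcd(r,q-1)=1$ and $r\equiv v-\sum_{i=1}^m s_it_i\pmod{q+1}$, then $X^r B(X^{q-1})$ permutes $\mathbb{F}_{q^2}$.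
   Context: A polynomial $f(X)\in\mathbb{F}_{q^2}[X]$ is said to permute $\mathbb{F}_{q^2}$ (be a permutation polynomial) if the map $c\mapsto f(c)$ is a bijection of $\mathbb{F}_{q^2}$. For a polynomial $g$ (or expression $X^vD(X)^{q-1}$, which for $c\in\mu_{q+1}$ is well defined even if $v$ is negative), ''permutes $\mu_{q+1}$'' means that $c\mapsto g(c)$ maps $\mu_{q+1}$ bijectively onto itself. *)

(* Defs.v *)
From HB Require Import structures.
From mathcomp Require Import all_boot all_order all_algebra all_field.
Set Implicit Arguments. Unset Strict Implicit. Unset Printing Implicit Defensive.
Import GRing.Theory Num.Theory.
Local Open Scope ring_scope.

Definition prime_power (q : nat) : Prop :=
  exists p k : nat, [/\ prime p, (0 < k)%N & q = (p ^ k)%N].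

Definition mu_root {F : finFieldType} (q : nat) : {set F} :=
  [set c : F | c ^+ q.+1 == 1].

Definition permutes_set {F : finFieldType} (A : {set F}) (g : F -> F) : Prop :=
  [/\ {in A, forall c, g c \in A},
      {in A &, injective g} &
      {in A, forall d, exists2 c, c \in A & g c = d}].

Definition is_perm_poly {F : finFieldType} (f : {poly F}) : Prop :=
  bijective (fun c : F => f.[c]).

Definition geom_poly {F : finFieldType} (s t : nat) : {poly F} :=
  \sum_(j < s.+1) 'X^(j * t).

(* Main.v *)
Require Import Defs.
From HB Require Import structures.
From mathcomp Require Import all_boot all_order all_algebra all_field.
From mathcomp Require Import zify.
Import GRing.Theory Num.Theory.
Local Open Scope ring_scope.

Lemma root_one (F : fieldType) (z : F) a b :
  z ^+ a = 1 -> z ^+ b = 1 -> coprime a b -> (0 < a)%N -> z = 1.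
Proof.
move=> za zb cab a0; have [u _ hu] := Bezoutl b a0.
rewrite (eqP cab) in hu; case/dvdnP: hu => k hk.
have : z ^+ (1 + u * b) = 1 by rewrite hk mulnC exprM za expr1n.
by rewrite exprD expr1 mulnC exprM zb expr1n mulr1.
Qed.

Lemma exprz_mod (F : fieldType) (c : F) (n : nat) (a b : int) :
  c ^+ n = 1 -> (a = b %[mod n%:Z])%Z -> c ^ a = c ^ b.
Proof.
move=> cn /eqP; rewrite eqz_mod_dvd => /dvdzP [k hk].
rewrite -(subrK b a) hk.
case: n cn hk => [|n] cn hk; first by rewrite mulr0 add0r.
have cu : c \is a GRing.unit.
  rewrite unitfE; apply/eqP => c0; move: cn; rewrite c0 expr0n /= => /eqP.
  by rewrite eq_sym oner_eq0.
rewrite exprzDr // (mulrC k) -exprz_exp.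
have -> : c ^ (n.+1 : int) = c ^+ n.+1 by [].
by rewrite cn exp1rz mul1r.
Qed.

Lemma frobq (F : fieldType) p k (x y : F) : p \in [pchar F] ->
  (x + y) ^+ (p ^ k) = x ^+ (p ^ k) + y ^+ (p ^ k).
Proof.
move=> chp; apply: exprDn_pchar; rewrite pnatX pnatE ?chp //.
exact: (pcharf_prime chp).
Qed.

Lemma frob_sum (F : fieldType) p k (I : Type) (r : seq I) (P : pred I) (f : I -> F) :
  p \in [pchar F] ->
  (\sum_(i <- r | P i) f i) ^+ (p ^ k) = \sum_(i <- r | P i) (f i) ^+ (p ^ k).
Proof.
move=> chp.
apply: (big_morph (fun x : F => x ^+ (p ^ k))).
  by move=> x y; apply: frobq.
have : (0 < p ^ k)%N by rewrite expn_gt0 prime_gt0 // (pcharf_prime chp).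
by case: (p ^ k)%N => // n _; rewrite expr0n.
Qed.

Lemma geom_unit (F : finFieldType) p k (c : F) s t :
  p \in [pchar F] -> (0 < k)%N ->
  c ^+ (p ^ k).+1 = 1 -> gcdn s.+1 (p ^ k) = 1%N ->
  coprime ((p ^ k).+1 %/ gcdn t (p ^ k).+1) s.+1 ->
  c ^+ (s * t) * (geom_poly s t).[c] ^+ (p ^ k - 1) = 1.
Proof.
move=> chp k0; set q := (p ^ k)%N => cq gs gt.
have pp := pcharf_prime chp.
have q0 : (0 < q)%N by rewrite expn_gt0 prime_gt0.
set x := c ^+ t.
have xq : x ^+ q.+1 = 1 by rewrite /x -exprM mulnC exprM cq expr1n.
have eg : (geom_poly s t).[c] = \sum_(j < s.+1) x ^+ j.
  rewrite /geom_poly horner_sum; apply: eq_bigr => j _.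
  by rewrite hornerXn /x -exprM mulnC.
rewrite eg mulnC exprM -/x; set g := \sum_(j < s.+1) x ^+ j.
have gq : x ^+ s * g ^+ q = g.
  rewrite /g /q frob_sum // mulr_sumr.
  rewrite (reindex_inj rev_ord_inj) /=; apply: eq_bigr => j _.
  have js : (j <= s)%N by rewrite -ltnS.
  rewrite /= subSS.
  have -> : x ^+ s = x ^+ j * x ^+ (s - j) by rewrite -exprD subnKC.
  rewrite -mulrA -exprS -exprM -[X in _ = X]mulr1; congr (_ * _).
  by rewrite -/q mulnC exprM xq expr1n.
have gnz : g != 0.
  case: (eqVneq x 1) => [x1|x1].
    rewrite /g x1 (eq_bigr (fun _ => 1)) => [|j _]; last by rewrite expr1n.
    rewrite sumr_const card_ord -(dvdn_pcharf chp); apply/negP => ps.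
    have : (p %| gcdn s.+1 q)%N by rewrite dvdn_gcd ps /q dvdn_exp.
    by rewrite gs dvdn1 => /eqP p1; move: (prime_gt1 pp); rewrite p1.
  apply/eqP => g0; move/eqP: x1; apply.
  have xs : x ^+ s.+1 = 1 by apply/eqP; rewrite -subr_eq0 subrX1 -/g g0 mulr0.
  set d := gcdn t q.+1.
  have d0 : (0 < d)%N by rewrite gcdn_gt0 orbT.
  apply: (@root_one _ x _ _ _ xs gt); last by rewrite divn_gt0 // dvdn_leq // dvdn_gcdr.
  rewrite /x -exprM muln_divA ?dvdn_gcdr // -divn_mulAC ?dvdn_gcdl //.
  by rewrite mulnC exprM cq expr1n.
apply: (mulIf gnz); rewrite mul1r -mulrA -exprSr subn1 prednK //.
Qed.

Lemma key (F : finFieldType) q (h : F -> F) (B : {poly F}) r :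
  (1 < q)%N -> #|F| = (q ^ 2)%N -> (0 < r)%N -> coprime r (q - 1) ->
  {in mu_root q, forall c, h c \in mu_root q} -> {in mu_root q &, injective h} ->
  {in mu_root q, forall c, c ^+ r * B.[c] ^+ (q - 1) = h c} ->
  is_perm_poly ('X^r * (B \Po 'X^(q - 1))).
Proof.
move=> q1 card r0 cop hmu hinj hB.
have ar : ((q - 1) * q.+1 = #|F|.-1)%N.
  rewrite card expnS expn1; nia.
have cF : (0 < #|F|)%N by rewrite card expn_gt0; case: q q1 {card cop hmu hinj hB ar}.
pose f x := x ^+ r * B.[x ^+ (q - 1)].
have ef (x : F) : ('X^r * (B \Po 'X^(q - 1))).[x] = f x.
  by rewrite hornerM hornerXn horner_comp hornerXn.
have mu_pow (x : F) : x != 0 -> x ^+ (q - 1) \in mu_root q.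
  move=> x0; rewrite inE -exprM.
  rewrite ar.
  have e : x ^+ #|F| = x := expf_card x; rewrite -(prednK cF) exprS in e.
  by apply/eqP; apply: (mulfI x0); rewrite e mulr1.
have q10 : (0 < q - 1)%N by rewrite subn_gt0.
have fpow (x : F) : x != 0 -> f x ^+ (q - 1) = h (x ^+ (q - 1)).
  move=> x0; rewrite -hB ?mu_pow // /f exprMn -!exprM mulnC.
  by rewrite exprM.
have fnz (x : F) : x != 0 -> f x != 0.
  move=> x0; apply/eqP => f0; have := hmu _ (mu_pow x x0).
  rewrite -fpow // f0 expr0n eqn0Ngt q10 /= inE expr0n /=.
  by rewrite eq_sym oner_eq0.
have f0 : f 0 = 0 by rewrite /f expr0n eqn0Ngt r0 mul0r.
rewrite /is_perm_poly; apply: injF_bij => x y /=; rewrite !ef.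
case: (eqVneq x 0) => [->|x0]; case: (eqVneq y 0) => [->|y0] //.
- by rewrite f0 => /esym/eqP; rewrite (negbTE (fnz _ y0)).
- by rewrite f0 => /eqP; rewrite (negbTE (fnz _ x0)).
move=> hxy.
have e1 : x ^+ (q - 1) = y ^+ (q - 1).
  by apply: hinj; rewrite ?mu_pow // -!fpow // hxy.
pose z := y / x.
have zq : z ^+ (q - 1) = 1.
  by rewrite /z exprMn exprVn e1 divff // expf_neq0.
have ey : f y = z ^+ r * f x.
  by rewrite /f -e1 mulrA -exprMn /z divfK.
have zr : z ^+ r = 1.
  apply: (mulIf (fnz _ x0)); by rewrite mul1r -ey hxy.
have z1 := @root_one _ z _ _ zr zq cop r0.
by rewrite -(divfK x0 y) -/z z1 mul1r.
Qed.

Lemma sum_posz (m : nat) (g : 'I_m -> nat) :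
  \sum_(i < m) (g i)%:Z = (\sum_(i < m) g i)%N%:Z.
Proof. by elim/big_rec2: _ => // i a b _ ->; rewrite PoszD. Qed.

Theorem corollary3 (q : nat) (F : finFieldType) (v : int) (D : {poly F})
  (m : nat) (s t : 'I_m -> nat) :
  prime_power q ->
  #|F| = (q ^ 2)%N ->
  permutes_set (mu_root q) (fun c : F => c ^ v * (D.[c]) ^+ (q - 1)) ->
  (forall i, 0 < s i)%N ->
  (forall i, 0 < t i)%N ->
  (forall i, gcdn (s i).+1 q = 1%N) ->
  (forall i, coprime (q.+1 %/ gcdn (t i) q.+1) (s i).+1) ->
  (forall r : nat, (0 < r)%N -> coprime r (q - 1) ->
     (r%:Z = v + \sum_(i < m) ((s i * t i)%N)%:Z %[mod (q.+1)%:Z])%Z ->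
     is_perm_poly ('X^r * ((D * \prod_(i < m) geom_poly (s i) (t i)) \Po 'X^(q - 1))))
  /\
  (forall (B : {poly F}) (r : nat),
     D = B * \prod_(i < m) geom_poly (s i) (t i) ->
     (0 < r)%N -> coprime r (q - 1) ->
     (r%:Z = v - \sum_(i < m) ((s i * t i)%N)%:Z %[mod (q.+1)%:Z])%Z ->
     is_perm_poly ('X^r * (B \Po 'X^(q - 1)))).
Proof.
move=> [p [k [pp k0 qE]]] card [hmu hinj _] s0 t0 gs gt.
have chp : p \in [pchar F].
  by apply: (@card_finPcharP _ p (k * 2)) => //; rewrite card qE -expnM.
have q1 : (1 < q)%N by rewrite qE -{1}(expn0 p) ltn_exp2l // prime_gt1.
set S := (\sum_(i < m) (s i * t i))%N.
rewrite sum_posz -/S.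
set P := \prod_(i < m) geom_poly (s i) (t i).
have G : {in mu_root q, forall c : F, c ^+ S * P.[c] ^+ (q - 1) = 1}.
  move=> c; rewrite inE => /eqP cq.
  rewrite /P horner_prod -prodrXl /S -prodrXr -big_split /=.
  apply: big1 => i _; rewrite qE; apply: geom_unit => //; by rewrite -qE.
have cu (c : F) : c \in mu_root q -> c \is a GRing.unit.
  rewrite inE unitfE => /eqP cq; apply/eqP => c0; move: cq.
  by rewrite c0 expr0n /= => /eqP; rewrite eq_sym oner_eq0.
have cq (c : F) : c \in mu_root q -> c ^+ q.+1 = 1 by rewrite inE => /eqP.
split.
- move=> r r0 cop hr; apply: (@key F q _ _ r q1 card r0 cop hmu hinj) => c cm.
  have -> : c ^+ r = c ^ v * c ^+ S.
    have -> : c ^+ r = c ^ (r%:Z) by [].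
    by rewrite (@exprz_mod _ c _ _ _ (cq c cm) hr) exprzDr ?cu.
  by rewrite hornerM exprMn mulrACA G // mulr1.
- move=> B r hD r0 cop hr; apply: (@key F q _ _ r q1 card r0 cop hmu hinj) => c cm.
  have -> : c ^ v = c ^+ r * c ^+ S.
    have -> : c ^+ r = c ^ (r%:Z) by [].
    rewrite (@exprz_mod _ c _ _ _ (cq c cm) hr).
    have -> : c ^+ S = c ^ (S%:Z) by [].
    by rewrite -exprzDr ?cu // subrK.
  by rewrite hD hornerM exprMn mulrACA G // mulr1.
Qed.
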